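(* Let $1\le p\ne q<\infty$. No operators $T\in B(\ell^p)$ and $S\in B(\ell^q)$ are equivalent after one-sided extension.
   Context: $\ell^p=\ell^p(\mathbb N)$ over $\mathbb C$; $B(X,Y)$ denotes bounded linear operators; invertibility means bounded inverse; $X\oplus Y$ is the $\ell^2$-direct sum and $\mathrm{id}_X$ the identity. Operators $T\in B(X)$ and $S\in B(Y)$ are equivalent after extension if there exist Banach spaces $X'$, $Y'$ and invertible $E\in B(Y\oplus Y',X\oplus X')$, $F\in B(X\oplus X',Y\oplus Y')$ with $\begin{bmatrix}T&0\\0&\mathrm{id}_{X'}\end{bmatrix}=E\begin{bmatrix}S&0\\0&\mathrm{id}_{Y'}\end{bmatrix}F$. They are equivalent after one-sided extension if this holds with one of $X'$ or $Y'$ equal to the trivial space $\{0\}$. *)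

(* Defs.v *)
From Stdlib Require Import Reals ClassicalEpsilon.
Open Scope R_scope.

Definition Cx : Type := (R * R)%type.
Definition C0 : Cx := (0, 0).
Definition C1 : Cx := (1, 0).
Definition Cadd (a b : Cx) : Cx := (fst a + fst b, snd a + snd b).
Definition Copp (a : Cx) : Cx := (- fst a, - snd a).
Definition Cmul (a b : Cx) : Cx :=
  (fst a * fst b - snd a * snd b, fst a * snd b + snd a * fst b).
Definition Cmod (a : Cx) : R := sqrt (fst a * fst a + snd a * snd a).

Record Banach : Type := {
  bcar :> Type;
  bzero : bcar;
  badd : bcar -> bcar -> bcar;
  bopp : bcar -> bcar;
  bscal : Cx -> bcar -> bcar;
  bnorm : bcar -> R;
  badd_assoc : forall x y z, badd x (badd y z) = badd (badd x y) z;
  badd_comm : forall x y, badd x y = badd y x;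
  badd_zero : forall x, badd x bzero = x;
  badd_opp : forall x, badd x (bopp x) = bzero;
  bscal_one : forall x, bscal C1 x = x;
  bscal_mul : forall a b x, bscal a (bscal b x) = bscal (Cmul a b) x;
  bscal_addv : forall a x y, bscal a (badd x y) = badd (bscal a x) (bscal a y);
  bscal_adds : forall a b x, bscal (Cadd a b) x = badd (bscal a x) (bscal b x);
  bnorm_nonneg : forall x, 0 <= bnorm x;
  bnorm_zero : forall x, bnorm x = 0 -> x = bzero;
  bnorm_scal : forall a x, bnorm (bscal a x) = Cmod a * bnorm x;
  bnorm_triangle : forall x y, bnorm (badd x y) <= bnorm x + bnorm y;
  bcomplete : forall u : nat -> bcar,
    (forall eps, eps > 0 -> exists N, forall m n, (m >= N)%nat -> (n >= N)%nat ->
        bnorm (badd (u m) (bopp (u n))) < eps) ->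
    exists l, forall eps, eps > 0 -> exists N, forall n, (n >= N)%nat ->
        bnorm (badd (u n) (bopp l)) < eps
}.

Definition trivial_space (X : Banach) : Prop := forall x : X, x = bzero X.

(** * Normed subspaces of a vector space: a carrier with total operations,
    a domain predicate (the actual space) and a norm. *)
Record NSpace : Type := {
  ncar : Type;
  ndom : ncar -> Prop;
  nadd : ncar -> ncar -> ncar;
  nscal : Cx -> ncar -> ncar;
  nnorm : ncar -> R
}.

Definition NS_of_Banach (X : Banach) : NSpace :=
  {| ncar := bcar X; ndom := fun _ => True; nadd := badd X;
     nscal := bscal X; nnorm := bnorm X |}.

Definition NSsum (X Y : NSpace) : NSpace :=
  {| ncar := (ncar X * ncar Y)%type;
     ndom := fun z => ndom X (fst z) /\ ndom Y (snd z);
     nadd := fun z w => (nadd X (fst z) (fst w), nadd Y (snd z) (snd w));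
     nscal := fun a z => (nscal X a (fst z), nscal Y a (snd z));
     nnorm := fun z => sqrt (nnorm X (fst z) ^ 2 + nnorm Y (snd z) ^ 2) |}.

Definition rpow (x y : R) : R := if Rlt_dec 0 x then Rpower x y else 0.

Definition lp_member (p : R) (x : nat -> Cx) : Prop :=
  exists l, Un_cv (fun N => sum_f_R0 (fun n => rpow (Cmod (x n)) p) N) l.

Definition lp_sum (p : R) (x : nat -> Cx) : R :=
  epsilon (inhabits 0)
    (fun l => Un_cv (fun N => sum_f_R0 (fun n => rpow (Cmod (x n)) p) N) l).

Definition lp_norm (p : R) (x : nat -> Cx) : R := rpow (lp_sum p x) (/ p).

Definition lp (p : R) : NSpace :=
  {| ncar := nat -> Cx;
     ndom := lp_member p;
     nadd := fun x y n => Cadd (x n) (y n);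
     nscal := fun a x n => Cmul a (x n);
     nnorm := lp_norm p |}.

Definition bounded_op (X Y : NSpace) (f : ncar X -> ncar Y) : Prop :=
  (forall x, ndom X x -> ndom Y (f x)) /\
  (forall x y, ndom X x -> ndom X y -> f (nadd X x y) = nadd Y (f x) (f y)) /\
  (forall a x, ndom X x -> f (nscal X a x) = nscal Y a (f x)) /\
  (exists M, forall x, ndom X x -> nnorm Y (f x) <= M * nnorm X x).

Definition invertible_op (X Y : NSpace) (f : ncar X -> ncar Y) : Prop :=
  bounded_op X Y f /\
  exists g : ncar Y -> ncar X, bounded_op Y X g /\
    (forall x, ndom X x -> g (f x) = x) /\
    (forall y, ndom Y y -> f (g y) = y).

Definition ext_op (X : NSpace) (X' : Banach) (T : ncar X -> ncar X)
  : ncar (NSsum X (NS_of_Banach X')) -> ncar (NSsum X (NS_of_Banach X')) :=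
  fun z => (T (fst z), snd z).

Definition equiv_after_ext_with (X Y : NSpace) (T : ncar X -> ncar X)
  (S : ncar Y -> ncar Y) (X' Y' : Banach) : Prop :=
  exists (E : ncar (NSsum Y (NS_of_Banach Y')) -> ncar (NSsum X (NS_of_Banach X')))
         (F : ncar (NSsum X (NS_of_Banach X')) -> ncar (NSsum Y (NS_of_Banach Y'))),
    invertible_op (NSsum Y (NS_of_Banach Y')) (NSsum X (NS_of_Banach X')) E /\
    invertible_op (NSsum X (NS_of_Banach X')) (NSsum Y (NS_of_Banach Y')) F /\
    (forall z, ndom (NSsum X (NS_of_Banach X')) z ->
       ext_op X X' T z = E (ext_op Y Y' S (F z))).

Definition equiv_after_one_sided_ext (X Y : NSpace) (T : ncar X -> ncar X)
  (S : ncar Y -> ncar Y) : Prop :=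
  exists X' Y' : Banach, (trivial_space X' \/ trivial_space Y') /\
    equiv_after_ext_with X Y T S X' Y'.

(* Main.v *)
Require Import Defs.
From Stdlib Require Import Reals.
From Stdlib Require Import Lra Lia Psatz ClassicalEpsilon FunctionalExtensionality Classical ZArith.
Open Scope R_scope.

Lemma rpow_nonneg x y : 0 <= rpow x y.
Proof. unfold rpow; destruct (Rlt_dec 0 x); [unfold Rpower; left; apply exp_pos|lra]. Qed.

Lemma rpow_0 y : rpow 0 y = 0.
Proof. unfold rpow; destruct (Rlt_dec 0 0); lra. Qed.

Lemma rpow_pos x y : 0 < x -> rpow x y = Rpower x y.
Proof. intro h; unfold rpow; destruct (Rlt_dec 0 x); [reflexivity|lra]. Qed.

Lemma rpow_pos_lt x y : 0 < x -> 0 < rpow x y.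
Proof. intro h; rewrite rpow_pos by exact h; unfold Rpower; apply exp_pos. Qed.

Lemma rpow_1 e : rpow 1 e = 1.
Proof. rewrite rpow_pos by lra. unfold Rpower. rewrite ln_1, Rmult_0_r, exp_0. reflexivity. Qed.

Lemma rpow_le x y e : 0 < e -> 0 <= x <= y -> rpow x e <= rpow y e.
Proof.
  intros he [h1 h2]. destruct h1 as [h1|h1].
  - rewrite !rpow_pos by lra. apply Rle_Rpower_l; lra.
  - subst. rewrite rpow_0. apply rpow_nonneg.
Qed.

Lemma rpow_lt x y e : 0 < e -> 0 <= x < y -> rpow x e < rpow y e.
Proof.
  intros he [h1 h2]. destruct h1 as [h1|h1].
  - rewrite !rpow_pos by lra. apply Rlt_Rpower_l; lra.
  - subst. rewrite rpow_0. apply rpow_pos_lt. lra.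
Qed.

Lemma rpow_mult x y e : 0 <= x -> 0 <= y -> rpow (x*y) e = rpow x e * rpow y e.
Proof.
  intros hx hy. destruct hx as [hx|hx]; [|subst; rewrite Rmult_0_l, !rpow_0; ring].
  destruct hy as [hy|hy]; [|subst; rewrite Rmult_0_r, !rpow_0; ring].
  rewrite !rpow_pos by (try apply Rmult_lt_0_compat; lra).
  rewrite Rpower_mult_distr; auto.
Qed.

Lemma rpow_rpow x a b : 0 <= x -> rpow (rpow x a) b = rpow x (a*b).
Proof.
  intros hx. destruct hx as [hx|hx]; [|subst; rewrite !rpow_0; reflexivity].
  rewrite (rpow_pos x a) by exact hx. rewrite rpow_pos by (unfold Rpower; apply exp_pos).
  rewrite rpow_pos by exact hx. apply Rpower_mult.
Qed.

Lemma rpow_inv_l x e : 0 < e -> 0 <= x -> rpow (rpow x e) (/e) = x.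
Proof.
  intros he hx. rewrite rpow_rpow by exact hx. rewrite Rinv_r by lra.
  destruct hx as [hx|hx]; [|subst; apply rpow_0]. rewrite rpow_pos by exact hx. apply Rpower_1; exact hx.
Qed.

Lemma rpow_inv_r x e : 0 < e -> 0 <= x -> rpow (rpow x (/e)) e = x.
Proof.
  intros he hx. rewrite rpow_rpow by exact hx. rewrite Rinv_l by lra.
  destruct hx as [hx|hx]; [|subst; apply rpow_0]. rewrite rpow_pos by exact hx. apply Rpower_1; exact hx.
Qed.

Lemma rpow_le_inv x y e : 0 < e -> 0 <= x -> 0 <= y -> rpow x e <= rpow y e -> x <= y.
Proof.
  intros he hx hy h. destruct (Rle_dec x y) as [|n]; [assumption|].
  assert (rpow y e < rpow x e) by (apply rpow_lt; lra). lra.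
Qed.

Lemma rpow_plus x a b : 0 < x -> rpow x (a+b) = rpow x a * rpow x b.
Proof. intro h; rewrite !rpow_pos by exact h; apply Rpower_plus. Qed.

Lemma rpow_ge1 x e : 1 <= x -> 0 <= e -> 1 <= rpow x e.
Proof.
  intros hx he. rewrite rpow_pos by lra. unfold Rpower.
  rewrite <- exp_0 at 1. destruct he as [he|he].
  - destruct hx as [hx|hx].
    + left; apply exp_increasing. apply Rmult_lt_0_compat; auto. rewrite <- ln_1. apply ln_increasing; lra.
    + subst. rewrite ln_1, Rmult_0_r. lra.
  - subst. rewrite Rmult_0_l. lra.
Qed.

Lemma rpow_unbounded e K : 0 < e -> exists N : nat, (1 <= N)%nat /\ K < rpow (INR N) e.
Proof.
  intros he.
  set (K' := Rmax K 1).
  set (x := rpow K' (/e)).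
  destruct (archimed x) as [h1 _].
  assert (hx : 0 < x) by (apply rpow_pos_lt; unfold K'; pose proof (Rmax_r K 1); lra).
  assert (hup : (0 < up x)%Z) by (apply lt_IZR; lra).
  exists (S (Z.to_nat (up x))). split; [lia|].
  assert (hN : x < INR (S (Z.to_nat (up x)))).
  { rewrite S_INR, INR_IZR_INZ, Z2Nat.id by lia. lra. }
  assert (K <= K') by apply Rmax_l.
  assert (K' = rpow x e) by (unfold x; rewrite rpow_inv_r; unfold K'; try pose proof (Rmax_r K 1); lra).
  assert (rpow x e < rpow (INR (S (Z.to_nat (up x)))) e) by (apply rpow_lt; lra).
  lra.
Qed.

Lemma Cmod_ge0 z : 0 <= Cmod z.
Proof. unfold Cmod; apply sqrt_pos. Qed.

Lemma Cmod_C0 : Cmod C0 = 0.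
Proof. unfold Cmod, C0; simpl. replace (0*0+0*0) with 0 by ring. apply sqrt_0. Qed.

Lemma Cmod_re z : Rabs (fst z) <= Cmod z.
Proof.
  unfold Cmod. rewrite <- sqrt_Rsqr_abs. apply sqrt_le_1_alt. unfold Rsqr.
  pose proof (Rle_0_sqr (snd z)); unfold Rsqr in *; lra.
Qed.

Lemma Cmod_im z : Rabs (snd z) <= Cmod z.
Proof.
  unfold Cmod. rewrite <- sqrt_Rsqr_abs. apply sqrt_le_1_alt. unfold Rsqr.
  pose proof (Rle_0_sqr (fst z)); unfold Rsqr in *; lra.
Qed.

Lemma Cmod_le_sum z : Cmod z <= Rabs (fst z) + Rabs (snd z).
Proof.
  unfold Cmod. destruct z as [a b]; simpl.
  rewrite <- (sqrt_Rsqr (Rabs a + Rabs b)) by (pose proof (Rabs_pos a); pose proof (Rabs_pos b); lra).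
  apply sqrt_le_1_alt. unfold Rsqr.
  pose proof (Rabs_pos a); pose proof (Rabs_pos b).
  assert (a*a = Rabs a * Rabs a) by (rewrite <- Rabs_mult; rewrite Rabs_right; [ring|apply Rle_ge; apply Rle_0_sqr]).
  assert (b*b = Rabs b * Rabs b) by (rewrite <- Rabs_mult; rewrite Rabs_right; [ring|apply Rle_ge; apply Rle_0_sqr]).
  nra.
Qed.

Lemma Cmod_triangle a b : Cmod (Cadd a b) <= Cmod a + Cmod b.
Proof.
  destruct a as [x y], b as [u v]. unfold Cmod, Cadd; simpl.
  set (A := sqrt (x*x+y*y)). set (B := sqrt (u*u+v*v)).
  assert (hA : 0 <= A) by apply sqrt_pos. assert (hB : 0 <= B) by apply sqrt_pos.
  assert (hA2 : A*A = x*x+y*y) by (apply sqrt_sqrt; nra).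
  assert (hB2 : B*B = u*u+v*v) by (apply sqrt_sqrt; nra).
  rewrite <- (sqrt_Rsqr (A+B)) by lra.
  apply sqrt_le_1_alt. unfold Rsqr.
  assert (x*u+y*v <= A*B).
  { assert ((x*u+y*v)*(x*u+y*v) <= (A*B)*(A*B)).
    { replace ((A*B)*(A*B)) with ((A*A)*(B*B)) by ring. rewrite hA2, hB2.
      pose proof (Rle_0_sqr (x*v-y*u)). unfold Rsqr in *. nra. }
    assert (0 <= A*B) by nra. nra. }
  nra.
Qed.

Lemma Cmod_neg z : Cmod (Cmul (-1, 0) z) = Cmod z.
Proof. destruct z as [a b]; unfold Cmod, Cmul; simpl. f_equal. ring. Qed.

Lemma Cmod_C1 : Cmod Defs.C1 = 1.
Proof. unfold Cmod, Defs.C1; simpl. replace (1*1+0*0) with 1 by ring. apply sqrt_1. Qed.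

Definition pw (s : R) (z : Cx) : R := rpow (Cmod z) s.

Lemma pw_nonneg s z : 0 <= pw s z.
Proof. apply rpow_nonneg. Qed.

Lemma pw_C0 s : pw s C0 = 0.
Proof. unfold pw; rewrite Cmod_C0; apply rpow_0. Qed.

Lemma pw_C1 s : pw s Defs.C1 = 1.
Proof. unfold pw; rewrite Cmod_C1; apply rpow_1. Qed.

Lemma Cadd_C0_r z : Cadd z C0 = z.
Proof. destruct z; unfold Cadd, C0; simpl; f_equal; ring. Qed.
Lemma Cadd_C0_l z : Cadd C0 z = z.
Proof. destruct z; unfold Cadd, C0; simpl; f_equal; ring. Qed.

Lemma pw_add_disj s x y : x = C0 \/ y = C0 -> pw s (Cadd x y) = pw s x + pw s y.
Proof.
  intros [->| ->]. rewrite Cadd_C0_l, pw_C0; ring. rewrite Cadd_C0_r, pw_C0; ring.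
Qed.

Definition Q (s : R) := rpow 2 s.

Lemma Q_ge1 s : 0 < s -> 1 <= Q s.
Proof. intro; apply rpow_ge1; lra. Qed.

Lemma pw_quasi s a b : 0 < s -> pw s (Cadd a b) <= Q s * (pw s a + pw s b).
Proof.
  intros hs. unfold pw, Q.
  pose proof (Cmod_triangle a b). pose proof (Cmod_ge0 a). pose proof (Cmod_ge0 b).
  pose proof (Cmod_ge0 (Cadd a b)).
  pose proof (rpow_nonneg (Cmod a) s). pose proof (rpow_nonneg (Cmod b) s).
  assert (h2 : 0 <= rpow 2 s) by apply rpow_nonneg.
  destruct (Rle_dec (Cmod a) (Cmod b)).
  - assert (rpow (Cmod (Cadd a b)) s <= rpow (2 * Cmod b) s) by (apply rpow_le; lra).
    rewrite rpow_mult in H5 by lra. nra.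
  - assert (rpow (Cmod (Cadd a b)) s <= rpow (2 * Cmod a) s) by (apply rpow_le; lra).
    rewrite rpow_mult in H5 by lra. nra.
Qed.

Lemma pw_quasi' s a b : 0 < s -> pw s a <= Q s * (pw s (Cadd a b) + pw s b).
Proof.
  intros hs. assert (a = Cadd (Cadd a b) (Cmul (-1,0) b)).
  { destruct a, b; unfold Cadd, Cmul; simpl; f_equal; ring. }
  rewrite H at 1. eapply Rle_trans. apply pw_quasi; auto.
  unfold pw. rewrite Cmod_neg. lra.
Qed.

Fixpoint fsum (f : nat -> R) (n : nat) : R :=
  match n with O => 0 | S m => fsum f m + f m end.

Lemma fsum_ext f g n : (forall k, (k < n)%nat -> f k = g k) -> fsum f n = fsum g n.
Proof. induction n; simpl; intros; auto. rewrite IHn by (intros; apply H; lia). rewrite H by lia; auto. Qed.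

Lemma fsum_le f g n : (forall k, (k < n)%nat -> f k <= g k) -> fsum f n <= fsum g n.
Proof. induction n; simpl; intros; [lra|]. pose proof (IHn ltac:(intros; apply H; lia)). pose proof (H n ltac:(lia)). lra. Qed.

Lemma fsum_nonneg f n : (forall k, 0 <= f k) -> 0 <= fsum f n.
Proof. induction n; simpl; intros; [lra|]. pose proof (IHn H). pose proof (H n). lra. Qed.

Lemma fsum_mono f m n : (forall k, 0 <= f k) -> (m <= n)%nat -> fsum f m <= fsum f n.
Proof. intros hf h. induction h; [lra|]. simpl. pose proof (hf m0). lra. Qed.

Lemma fsum_add f g n : fsum (fun k => f k + g k) n = fsum f n + fsum g n.
Proof. induction n; simpl; [ring|]. rewrite IHn; ring. Qed.

Lemma fsum_scal c f n : fsum (fun k => c * f k) n = c * fsum f n.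
Proof. induction n; simpl; [ring|]. rewrite IHn; ring. Qed.

Lemma fsum_const c n : fsum (fun _ => c) n = INR n * c.
Proof. induction n; simpl fsum; [simpl; ring|]. rewrite IHn, S_INR; ring. Qed.

Lemma fsum_ind a n : fsum (fun k => if Nat.eqb k a then 1 else 0) n = if Nat.ltb a n then 1 else 0.
Proof.
  induction n; simpl; [reflexivity|]. rewrite IHn.
  destruct (Nat.eqb n a) eqn:E1; destruct (Nat.ltb a n) eqn:E2; destruct (Nat.ltb a (S n)) eqn:E3;
  apply Nat.eqb_eq in E1 || apply Nat.eqb_neq in E1;
  apply Nat.ltb_lt in E2 || apply Nat.ltb_ge in E2;
  apply Nat.ltb_lt in E3 || apply Nat.ltb_ge in E3; try lia; ring.
Qed.

Lemma sum_f_fsum f N : sum_f_R0 f N = fsum f (S N).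
Proof. induction N; simpl; [ring|]. rewrite IHN. simpl. ring. Qed.

Definition ps (s : R) (y : nat -> Cx) (K : nat) : R := fsum (fun k => pw s (y k)) K.

Lemma ps_nonneg s y K : 0 <= ps s y K.
Proof. apply fsum_nonneg; intros; apply pw_nonneg. Qed.

Lemma ps_mono s y m n : (m <= n)%nat -> ps s y m <= ps s y n.
Proof. intros; apply fsum_mono; auto; intros; apply pw_nonneg. Qed.

Lemma lp_cv s y : lp_member s y ->
  Un_cv (fun N => sum_f_R0 (fun n => rpow (Cmod (y n)) s) N) (lp_sum s y).
Proof. intros h. unfold lp_sum. apply epsilon_spec. exact h. Qed.

Lemma ps_le_sum s y K : lp_member s y -> ps s y K <= lp_sum s y.
Proof.
  intros h. pose proof (lp_cv s y h) as hc.
  destruct K.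
  - unfold ps; simpl. pose proof (sum_incr _ 0 _ hc (fun n => rpow_nonneg _ _)).
    simpl in H. pose proof (rpow_nonneg (Cmod (y 0%nat)) s). lra.
  - pose proof (sum_incr _ K _ hc (fun n => rpow_nonneg _ _)).
    rewrite sum_f_fsum in H. exact H.
Qed.

Lemma lp_sum_nonneg s y : lp_member s y -> 0 <= lp_sum s y.
Proof. intros h. pose proof (ps_le_sum s y 0 h). unfold ps in H; simpl in H. lra. Qed.

Lemma sum_approx s y tau : lp_member s y -> 0 < tau -> exists K, lp_sum s y - tau <= ps s y K.
Proof.
  intros h ht. destruct (lp_cv s y h tau ht) as [N hN].
  exists (S N). specialize (hN N (le_n N)). unfold R_dist in hN.
  rewrite sum_f_fsum in hN. apply Rabs_def2 in hN. unfold ps, pw. destruct hN. lra.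
Qed.

Lemma sum_le_bound s y B : lp_member s y -> (forall K, ps s y K <= B) -> lp_sum s y <= B.
Proof.
  intros h hb. destruct (Rle_dec (lp_sum s y) B) as [|n]; [auto|].
  assert (hp : 0 < (lp_sum s y - B)/2) by (apply Rnot_le_lt in n; lra).
  destruct (sum_approx s y ((lp_sum s y - B)/2) h hp) as [K hK].
  specialize (hb K). lra.
Qed.

Lemma finsupp s y K0 : (forall k, (K0 <= k)%nat -> y k = C0) ->
  lp_member s y /\ lp_sum s y = ps s y K0.
Proof.
  intros hz.
  assert (hc : Un_cv (fun N => sum_f_R0 (fun n => rpow (Cmod (y n)) s) N) (ps s y K0)).
  { intros eps he. exists K0. intros n hn. unfold R_dist. rewrite sum_f_fsum.
    assert (fsum (fun n0 => rpow (Cmod (y n0)) s) (S n) = ps s y K0).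
    { unfold ps. assert (S n = K0 + (S n - K0))%nat by lia. rewrite H.
      generalize (S n - K0)%nat. intro m. induction m.
      - rewrite Nat.add_0_r. reflexivity.
      - rewrite Nat.add_succ_r. simpl. rewrite IHm. rewrite hz by lia.
        fold (pw s C0). rewrite pw_C0. ring. }
    rewrite H. rewrite Rminus_diag, Rabs_R0. exact he. }
  assert (hm : lp_member s y) by (exists (ps s y K0); exact hc).
  split; auto. eapply UL_sequence. apply lp_cv; auto. exact hc.
Qed.

Lemma lp_norm_eq s y : lp_norm s y = rpow (lp_sum s y) (/ s).
Proof. reflexivity. Qed.

Lemma lp_norm_nonneg s y : 0 <= lp_norm s y.
Proof. apply rpow_nonneg. Qed.

Definition infinite (P : nat -> Prop) := forall B, exists n, (B <= n)%nat /\ P n.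

Lemma pig1 K : forall (P : nat -> Prop) (f : nat -> nat), infinite P ->
  (forall n, P n -> (f n <= K)%nat) -> exists v, infinite (fun n => P n /\ f n = v).
Proof.
  induction K; intros P f hP hf.
  - exists 0%nat. intros B. destruct (hP B) as [n [h1 h2]]. exists n. split; auto. split; auto.
    specialize (hf n h2). lia.
  - destruct (classic (infinite (fun n => P n /\ f n = S K))) as [h|h].
    + exists (S K). exact h.
    + unfold infinite in h. apply not_all_ex_not in h. destruct h as [B0 hB0].
      destruct (IHK (fun n => P n /\ (B0 <= n)%nat) f) as [v hv].
      * intros B. destruct (hP (Nat.max B B0)) as [n [h1 h2]]. exists n. split; [lia|]. split; auto; lia.
      * intros n [h1 h2]. specialize (hf n h1).
        assert (f n <> S K). { intro e. apply hB0. exists n. auto. }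
        lia.
      * exists v. intros B. destruct (hv B) as [n [h1 [[h2 h3] h4]]]. exists n. auto.
Qed.

Lemma pigL L : forall (P : nat -> Prop) (g : nat -> nat -> nat) K, infinite P ->
  (forall n k, P n -> (g n k <= K)%nat) ->
  exists P' : nat -> Prop, infinite P' /\ (forall n, P' n -> P n) /\
     (forall n m, P' n -> P' m -> forall k, (k < L)%nat -> g n k = g m k).
Proof.
  induction L; intros P g K hP hg.
  - exists P. split; auto. split; auto. intros; lia.
  - destruct (IHL P g K hP hg) as [P' [h1 [h2 h3]]].
    destruct (pig1 K P' (fun n => g n L) h1) as [v hv].
    { intros n hn. apply hg. apply h2; auto. }
    exists (fun n => P' n /\ g n L = v). split; auto. split.
    + intros n [a b]. auto.
    + intros n m [a b] [c d] k hk. destruct (Nat.eq_dec k L).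
      * subst. congruence.
      * apply h3; auto. lia.
Qed.

Lemma Rabs_le_inv v M : Rabs v <= M -> -M <= v <= M.
Proof. unfold Rabs; destruct (Rcase_abs v); lra. Qed.

Lemma Rdiv_le_0_compat a b : 0 <= a -> 0 < b -> 0 <= a / b.
Proof. intros; unfold Rdiv; apply Rmult_le_pos; [lra|left; apply Rinv_0_lt_compat; lra]. Qed.

Definition quant (eta M v : R) : nat := Z.to_nat (up ((v + M) / eta)).

Lemma quant_close eta M v v' : 0 < eta -> Rabs v <= M -> Rabs v' <= M ->
  quant eta M v = quant eta M v' -> Rabs (v - v') < eta.
Proof.
  intros he hv hv' hq. unfold quant in hq.
  apply Rabs_le_inv in hv. apply Rabs_le_inv in hv'.
  assert (h0 : 0 <= (v + M)/eta) by (apply Rdiv_le_0_compat; lra).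
  assert (h0' : 0 <= (v' + M)/eta) by (apply Rdiv_le_0_compat; lra).
  destruct (archimed ((v+M)/eta)) as [a1 a2]. destruct (archimed ((v'+M)/eta)) as [b1 b2].
  assert (p1 : (0 < up ((v+M)/eta))%Z) by (apply lt_IZR; lra).
  assert (p2 : (0 < up ((v'+M)/eta))%Z) by (apply lt_IZR; lra).
  assert (up ((v+M)/eta) = up ((v'+M)/eta)).
  { apply Z2Nat.inj; lia. }
  rewrite H in a1, a2.
  assert (Rabs ((v+M)/eta - (v'+M)/eta) < 1) by (apply Rabs_def1; lra).
  replace ((v+M)/eta - (v'+M)/eta) with ((v - v')/eta) in H0 by (field; lra).
  unfold Rdiv in H0. rewrite Rabs_mult, Rabs_inv, (Rabs_right eta) in H0 by lra.
  apply Rmult_lt_compat_r with (r := eta) in H0; [|lra].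
  rewrite Rmult_assoc, Rinv_l, Rmult_1_r, Rmult_1_l in H0 by lra. exact H0.
Qed.

Lemma quant_bound eta M v : 0 < eta -> Rabs v <= M ->
  (quant eta M v <= Z.to_nat (up (2*M/eta)))%nat.
Proof.
  intros he hv. unfold quant. apply Rabs_le_inv in hv.
  destruct (archimed ((v+M)/eta)) as [a1 a2]. destruct (archimed (2*M/eta)) as [b1 b2].
  assert ((v+M)/eta <= 2*M/eta) by (unfold Rdiv; apply Rmult_le_compat_r; [left; apply Rinv_0_lt_compat; lra|lra]).
  assert (IZR (up ((v+M)/eta)) < IZR (up (2*M/eta)) + 1) by lra.
  rewrite <- plus_IZR in H0. apply lt_IZR in H0.
  apply Z2Nat.inj_le; try lia.
  - assert (0 <= (v+M)/eta) by (apply Rdiv_le_0_compat; lra). apply le_IZR. lra.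
  - assert (0 <= 2*M/eta) by (apply Rdiv_le_0_compat; lra). apply le_IZR. lra.
Qed.

Lemma close_pair (F : nat -> nat -> Cx) M H eta B : 0 < eta ->
  (forall n k, Cmod (F n k) <= M) ->
  exists a b, (B <= a)%nat /\ (a < b)%nat /\
    forall k, (k < H)%nat -> Rabs (fst (F a k) - fst (F b k)) < eta /\ Rabs (snd (F a k) - snd (F b k)) < eta.
Proof.
  intros he hM.
  assert (hre : forall n k, Rabs (fst (F n k)) <= M) by (intros; apply Rle_trans with (Cmod (F n k)); [apply Cmod_re|apply hM]).
  assert (him : forall n k, Rabs (snd (F n k)) <= M) by (intros; apply Rle_trans with (Cmod (F n k)); [apply Cmod_im|apply hM]).
  destruct (pigL H (fun _ => True) (fun n k => quant eta M (fst (F n k))) (Z.to_nat (up (2*M/eta))))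
    as [P1 [i1 [_ c1]]].
  { intros B0. exists B0. auto. }
  { intros; apply quant_bound; auto. }
  destruct (pigL H P1 (fun n k => quant eta M (snd (F n k))) (Z.to_nat (up (2*M/eta)))) as [P2 [i2 [s2 c2]]]; auto.
  { intros; apply quant_bound; auto. }
  destruct (i2 B) as [a [ha pa]]. destruct (i2 (S a)) as [b [hb pb]].
  exists a, b. split; auto. split; [lia|]. intros k hk. split.
  - apply (quant_close eta M); auto.
  - apply (quant_close eta M); auto.
Qed.

Record EmbedH (r s : R) (J : (nat -> Cx) -> (nat -> Cx)) (M M' : R) : Prop := {
  e_r : 0 < r; e_s : 0 < s; e_M : 0 < M; e_M' : 0 < M';
  e_dom : forall x, lp_member r x -> lp_member s (J x);
  e_add : forall x y, lp_member r x -> lp_member r y ->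
     J (fun n => Cadd (x n) (y n)) = (fun n => Cadd (J x n) (J y n));
  e_scal : forall a x, lp_member r x -> J (fun n => Cmul a (x n)) = (fun n => Cmul a (J x n));
  e_up : forall x, lp_member r x -> lp_norm s (J x) <= M * lp_norm r x;
  e_low : forall x, lp_member r x -> lp_norm r x <= M' * lp_norm s (J x) }.

Definition ev (a : nat) : nat -> Cx := fun k => if Nat.eqb k a then Defs.C1 else C0.
Definition dv (a b : nat) : nat -> Cx := fun k => Cadd (ev a k) (Cmul (-1,0) (ev b k)).
Definition ind (a k : nat) : R := if Nat.eqb k a then 1 else 0.

Lemma ev_supp a k : (a < k)%nat -> ev a k = C0.
Proof. intros; unfold ev. destruct (Nat.eqb_spec k a); [lia|auto]. Qed.

Lemma Cmul_neg_C0 : Cmul (-1,0) C0 = C0.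
Proof. unfold Cmul, C0; simpl; f_equal; ring. Qed.

Lemma dv_supp a b k : (a < k)%nat -> (b < k)%nat -> dv a b k = C0.
Proof. intros. unfold dv. rewrite !ev_supp by auto. rewrite Cmul_neg_C0, Cadd_C0_r. auto. Qed.

Lemma pw_dv s a b k : (a <> b)%nat -> pw s (dv a b k) = ind a k + ind b k.
Proof.
  intros hab. unfold dv, ev, ind.
  destruct (Nat.eqb_spec k a); destruct (Nat.eqb_spec k b); try lia.
  - rewrite Cmul_neg_C0, Cadd_C0_r, pw_C1. ring.
  - replace (Cadd C0 (Cmul (-1, 0) Defs.C1)) with (Cmul (-1,0) Defs.C1)
      by (unfold Cadd, Cmul, C0, Defs.C1; simpl; f_equal; ring).
    unfold pw. rewrite Cmod_neg. fold (pw s Defs.C1). rewrite pw_C1. ring.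
  - rewrite Cmul_neg_C0, Cadd_C0_r, pw_C0. ring.
Qed.

Lemma fsum_indk a n : fsum (fun k => ind a k) n = if Nat.ltb a n then 1 else 0.
Proof. apply fsum_ind. Qed.

Lemma ev_member r a : lp_member r (ev a) /\ lp_sum r (ev a) = 1.
Proof.
  destruct (finsupp r (ev a) (S a)) as [h1 h2].
  { intros; apply ev_supp; lia. }
  split; auto. rewrite h2. unfold ps.
  rewrite (fsum_ext _ (fun k => ind a k)).
  - rewrite fsum_indk. destruct (Nat.ltb_spec a (S a)); [auto|lia].
  - intros k _. unfold ev, ind. destruct (Nat.eqb k a). apply pw_C1. apply pw_C0.
Qed.

Lemma ev_norm r a : 0 < r -> lp_norm r (ev a) = 1.
Proof. intros. rewrite lp_norm_eq. destruct (ev_member r a) as [_ ->]. apply rpow_1. Qed.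

Lemma evneg_member r b : lp_member r (fun k => Cmul (-1,0) (ev b k)).
Proof.
  destruct (finsupp r (fun k => Cmul (-1,0) (ev b k)) (S b)) as [h1 h2]; auto.
  intros; rewrite ev_supp by lia. apply Cmul_neg_C0.
Qed.

Lemma dv_member r a b : (a < b)%nat -> lp_member r (dv a b) /\ lp_sum r (dv a b) = 2.
Proof.
  intros hab. destruct (finsupp r (dv a b) (S b)) as [h1 h2].
  { intros; apply dv_supp; lia. }
  split; auto. rewrite h2. unfold ps.
  rewrite (fsum_ext _ (fun k => ind a k + ind b k)) by (intros; apply pw_dv; lia).
  rewrite fsum_add, !fsum_indk.
  destruct (Nat.ltb_spec a (S b)); destruct (Nat.ltb_spec b (S b)); try lia. ring.
Qed.

Lemma J_dv r s J M M' a b : EmbedH r s J M M' ->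
  J (dv a b) = fun k => Cadd (J (ev a) k) (Cmul (-1,0) (J (ev b) k)).
Proof.
  intros hE. unfold dv.
  rewrite (e_add _ _ _ _ _ hE (ev a) (fun k => Cmul (-1,0) (ev b k))).
  - rewrite (e_scal _ _ _ _ _ hE). reflexivity. apply ev_member.
  - apply ev_member.
  - apply evneg_member.
Qed.

Lemma pw_le_sum s y k : lp_member s y -> pw s (y k) <= lp_sum s y.
Proof.
  intros h. pose proof (ps_le_sum s y (S k) h). unfold ps in H. simpl in H.
  pose proof (fsum_nonneg (fun k0 => pw s (y k0)) k (fun _ => pw_nonneg _ _)). lra.
Qed.

Lemma J_ev_bound r s J M M' : EmbedH r s J M M' -> forall n k, Cmod (J (ev n) k) <= M.
Proof.
  intros hE n k. pose proof (e_r _ _ _ _ _ hE). pose proof (e_s _ _ _ _ _ hE). pose proof (e_M _ _ _ _ _ hE).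
  destruct (ev_member r n) as [hm hs].
  pose proof (e_up _ _ _ _ _ hE _ hm) as hu. rewrite (ev_norm r n H), Rmult_1_r in hu.
  pose proof (e_dom _ _ _ _ _ hE _ hm) as hd.
  pose proof (pw_le_sum s _ k hd).
  rewrite lp_norm_eq in hu.
  assert (lp_sum s (J (ev n)) <= rpow M s).
  { rewrite <- (rpow_inv_r (lp_sum s (J (ev n))) s) by (auto; apply lp_sum_nonneg; auto).
    apply rpow_le; auto. split; auto. apply rpow_nonneg. }
  apply (rpow_le_inv _ _ s); auto. apply Cmod_ge0. lra. unfold pw in H2. lra.
Qed.

Lemma dv_zero a b k : k <> a -> k <> b -> dv a b k = C0.
Proof.
  intros h1 h2. unfold dv, ev. destruct (Nat.eqb_spec k a); [lia|]. destruct (Nat.eqb_spec k b); [lia|].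
  rewrite Cmul_neg_C0, Cadd_C0_r. auto.
Qed.

Definition inb (lo hi k : nat) : bool := Nat.leb lo k && Nat.ltb k hi.

Definition outs s (w : nat -> Cx) lo hi K := fsum (fun k => if inb lo hi k then 0 else pw s (w k)) K.
Definition ins s (w : nat -> Cx) lo hi K := fsum (fun k => if inb lo hi k then pw s (w k) else 0) K.

Lemma ins_outs s w lo hi K : ins s w lo hi K + outs s w lo hi K = ps s w K.
Proof.
  unfold ins, outs, ps. rewrite <- fsum_add. apply fsum_ext. intros. destruct (inb lo hi k); ring.
Qed.

Lemma fsum_trunc (f : nat -> R) H n : (H <= n)%nat ->
  fsum (fun k => if Nat.ltb k H then f k else 0) n = fsum f H.
Proof.
  intros h. induction h.
  - apply fsum_ext. intros k hk. destruct (Nat.ltb_spec k H); [auto|lia].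
  - simpl. rewrite IHh. destruct (Nat.ltb_spec m H); [lia|ring].
Qed.

Lemma outs_mono s w lo hi m n : (m <= n)%nat -> outs s w lo hi m <= outs s w lo hi n.
Proof. intros; apply fsum_mono; auto. intros; destruct (inb lo hi k); [lra|apply pw_nonneg]. Qed.
Lemma ins_mono s w lo hi m n : (m <= n)%nat -> ins s w lo hi m <= ins s w lo hi n.
Proof. intros; apply fsum_mono; auto. intros; destruct (inb lo hi k); [apply pw_nonneg|lra]. Qed.

Definition good s (w : nat -> Cx) lo hi tau :=
  (forall K, outs s w lo hi K <= tau) /\ lp_sum s w - tau <= ins s w lo hi hi.

Lemma hump_step r s J M M' tau B H : EmbedH r s J M M' -> 0 < tau ->
  exists a b hi, (B <= a)%nat /\ (a < b)%nat /\ (H < hi)%nat /\ good s (J (dv a b)) H hi tau.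
Proof.
  intros hE ht.
  pose proof (e_r _ _ _ _ _ hE) as hr. pose proof (e_s _ _ _ _ _ hE) as hs.
  set (c := tau / (2 * (INR H + 1))).
  assert (hc : 0 < c) by (unfold c; apply Rdiv_lt_0_compat; [lra|pose proof (pos_INR H); lra]).
  set (delta := rpow c (/s)).
  assert (hd : 0 < delta) by (apply rpow_pos_lt; auto).
  destruct (close_pair (fun n k => J (ev n) k) M H (delta/2) B ltac:(lra) (J_ev_bound _ _ _ _ _ hE))
    as [a [b [hBa [hab hcl]]]].
  set (w := J (dv a b)).
  assert (hw : lp_member s w) by (apply (e_dom _ _ _ _ _ hE); apply dv_member; auto).
  assert (hhead : forall k, (k < H)%nat -> pw s (w k) <= c).
  { intros k hk. unfold w. rewrite (J_dv _ _ _ _ _ a b hE).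
    destruct (hcl k hk) as [h1 h2].
    set (z := Cadd (J (ev a) k) (Cmul (-1, 0) (J (ev b) k))).
    assert (Cmod z < delta).
    { eapply Rle_lt_trans. apply Cmod_le_sum. unfold z, Cadd, Cmul; simpl.
      replace (fst (J (ev a) k) + (-1 * fst (J (ev b) k) - 0 * snd (J (ev b) k)))
        with (fst (J (ev a) k) - fst (J (ev b) k)) by ring.
      replace (snd (J (ev a) k) + (-1 * snd (J (ev b) k) + 0 * fst (J (ev b) k)))
        with (snd (J (ev a) k) - snd (J (ev b) k)) by ring. lra. }
    unfold pw. rewrite <- (rpow_inv_r c s) by lra. fold delta.
    apply rpow_le; auto. split; [apply Cmod_ge0|lra]. }
  assert (hheadsum : ps s w H <= tau / 2).
  { unfold ps. eapply Rle_trans. apply (fsum_le _ (fun _ => c)). exact hhead.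
    rewrite fsum_const. pose proof (pos_INR H).
    apply Rmult_le_reg_r with (2 * (INR H + 1)); [lra|].
    assert (INR H * c * (2*(INR H+1)) = INR H * tau) by (unfold c; field; lra).
    rewrite H1. nra. }
  destruct (sum_approx s w (tau/2) hw ltac:(lra)) as [K1 hK1].
  set (hi := Nat.max K1 (S H)).
  exists a, b, hi. split; auto. split; auto. split; [unfold hi; lia|].
  assert (houthi : outs s w H hi hi = ps s w H).
  { unfold outs, ps. rewrite <- (fsum_trunc _ H hi) by (unfold hi; lia).
    apply fsum_ext. intros k hk. unfold inb.
    destruct (Nat.leb_spec H k); destruct (Nat.ltb_spec k hi); destruct (Nat.ltb_spec k H); simpl; try lia; auto. }
  assert (hpshi : lp_sum s w - tau/2 <= ps s w hi).
  { eapply Rle_trans. apply hK1. apply ps_mono. unfold hi; lia. }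
  pose proof (ins_outs s w H hi hi) as hio.
  assert (hin : lp_sum s w - tau <= ins s w H hi hi).
  { rewrite houthi in hio. apply Rle_trans with (ps s w hi - ps s w H); [|right; rewrite <- hio; ring]. apply Rle_trans with ((lp_sum s w - tau / 2) - tau / 2); [right; field|]. apply Rplus_le_compat; [exact hpshi|]. apply Ropp_le_contravar. exact hheadsum. }
  split; auto.
  intros K. destruct (Nat.le_gt_cases K hi).
  - apply Rle_trans with (outs s w H hi hi); [apply outs_mono; auto|]. rewrite houthi. lra.
  - pose proof (ins_outs s w H hi K). pose proof (ps_le_sum s w K hw).
    pose proof (ins_mono s w H hi hi K ltac:(lia)). fold w. lra.
Qed.

Definition ta (t : nat * nat * nat) := fst (fst t).
Definition tb (t : nat * nat * nat) := snd (fst t).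
Definition th (t : nat * nat * nat) := snd t.

Definition stepP s (J : (nat -> Cx) -> nat -> Cx) tau (B H : nat) (t : nat * nat * nat) : Prop :=
  (B <= ta t)%nat /\ (ta t < tb t)%nat /\ (H < th t)%nat /\ good s (J (dv (ta t) (tb t))) H (th t) tau.

Definition step s J tau B H : nat * nat * nat :=
  epsilon (inhabits (0%nat, 0%nat, 0%nat)) (stepP s J tau B H).

Lemma step_spec r s J M M' tau B H : EmbedH r s J M M' -> 0 < tau -> stepP s J tau B H (step s J tau B H).
Proof.
  intros hE ht. unfold step. apply epsilon_spec.
  destruct (hump_step r s J M M' tau B H hE ht) as [a [b [hi h]]].
  exists (a, b, hi). exact h.
Qed.

Fixpoint st s J tau (n : nat) : nat * nat :=
  match n with
  | O => (0%nat, 0%nat)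
  | S m => let t := step s J tau (fst (st s J tau m)) (snd (st s J tau m)) in (S (tb t), th t)
  end.


Definition Bn s J tau n := fst (st s J tau n).
Definition Hn s J tau n := snd (st s J tau n).
Definition dat s J tau n := step s J tau (Bn s J tau n) (Hn s J tau n).
Definition an s J tau n := ta (dat s J tau n).
Definition bn s J tau n := tb (dat s J tau n).
Definition hin s J tau n := th (dat s J tau n).

Lemma Bn_S s J tau n : Bn s J tau (S n) = S (bn s J tau n).
Proof. reflexivity. Qed.
Lemma Hn_S s J tau n : Hn s J tau (S n) = hin s J tau n.
Proof. reflexivity. Qed.

Lemma dat_spec r s J M M' tau n : EmbedH r s J M M' -> 0 < tau ->
  (Bn s J tau n <= an s J tau n)%nat /\ (an s J tau n < bn s J tau n)%nat /\
  (Hn s J tau n < hin s J tau n)%nat /\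
  good s (J (dv (an s J tau n) (bn s J tau n))) (Hn s J tau n) (hin s J tau n) tau.
Proof. intros hE ht. apply (step_spec r s J M M' tau _ _ hE ht). Qed.

Lemma Bn_mono r s J M M' tau m n : EmbedH r s J M M' -> 0 < tau -> (m <= n)%nat -> (Bn s J tau m <= Bn s J tau n)%nat.
Proof.
  intros hE ht h. induction h; [lia|]. rewrite Bn_S.
  destruct (dat_spec r s J M M' tau m0 hE ht) as [h1 [h2 _]]. unfold an, bn in *. lia.
Qed.

Lemma Hn_mono r s J M M' tau m n : EmbedH r s J M M' -> 0 < tau -> (m <= n)%nat -> (Hn s J tau m <= Hn s J tau n)%nat.
Proof.
  intros hE ht h. induction h; [lia|]. rewrite Hn_S.
  destruct (dat_spec r s J M M' tau m0 hE ht) as [_ [_ [h3 _]]]. lia.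
Qed.

Fixpoint uv s J tau (n : nat) : nat -> Cx :=
  match n with
  | O => fun _ => C0
  | S m => fun k => Cadd (uv s J tau m k) (dv (an s J tau m) (bn s J tau m) k)
  end.

Lemma uv_supp r s J M M' tau n k : EmbedH r s J M M' -> 0 < tau ->
  (Bn s J tau n <= k)%nat -> uv s J tau n k = C0.
Proof.
  intros hE ht. revert k. induction n; intros k hk; simpl; auto.
  rewrite Bn_S in hk. destruct (dat_spec r s J M M' tau n hE ht) as [h1 [h2 _]].
  rewrite IHn by lia. rewrite dv_supp by lia. apply Cadd_C0_r.
Qed.

Lemma uv_member r s J M M' tau n : EmbedH r s J M M' -> 0 < tau -> lp_member r (uv s J tau n).
Proof.
  intros hE ht. apply (finsupp r _ (Bn s J tau n)). intros; eapply uv_supp; eauto.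
Qed.

Lemma uv_ps r s J M M' tau n K : EmbedH r s J M M' -> 0 < tau ->
  (Bn s J tau n <= K)%nat -> ps r (uv s J tau n) K = 2 * INR n.
Proof.
  intros hE ht. revert K. induction n; intros K hK.
  - unfold ps. simpl. rewrite (fsum_ext _ (fun _ => 0)) by (intros; apply pw_C0).
    rewrite fsum_const. simpl. ring.
  - rewrite Bn_S in hK. destruct (dat_spec r s J M M' tau n hE ht) as [h1 [h2 _]].
    assert (hB : (Bn s J tau n <= K)%nat) by lia.
    unfold ps. simpl uv.
    rewrite (fsum_ext _ (fun k => pw r (uv s J tau n k) + (ind (an s J tau n) k + ind (bn s J tau n) k))).
    + rewrite fsum_add, fsum_add, !fsum_indk. fold (ps r (uv s J tau n) K). rewrite IHn by auto.
      destruct (Nat.ltb_spec (an s J tau n) K); destruct (Nat.ltb_spec (bn s J tau n) K); try lia.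
      rewrite S_INR. ring.
    + intros k _. rewrite pw_add_disj. rewrite pw_dv by lia. reflexivity.
      destruct (Nat.le_gt_cases (Bn s J tau n) k).
      * left. eapply uv_supp; eauto.
      * right. apply dv_zero; lia.
Qed.

Lemma uv_sum r s J M M' tau n : EmbedH r s J M M' -> 0 < tau -> lp_sum r (uv s J tau n) = 2 * INR n.
Proof.
  intros hE ht. destruct (finsupp r (uv s J tau n) (Bn s J tau n)) as [_ ->].
  { intros; eapply uv_supp; eauto. }
  eapply uv_ps; eauto.
Qed.

Definition wv s J tau n := J (dv (an s J tau n) (bn s J tau n)).

Lemma J_uv_S r s J M M' tau n : EmbedH r s J M M' -> 0 < tau ->
  J (uv s J tau (S n)) = fun k => Cadd (J (uv s J tau n) k) (wv s J tau n k).
Proof.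
  intros hE ht. simpl uv. apply (e_add _ _ _ _ _ hE).
  - eapply uv_member; eauto.
  - apply dv_member. destruct (dat_spec r s J M M' tau n hE ht) as [h1 [h2 _]]. auto.
Qed.

Lemma J_uv_0 r s J M M' tau k : EmbedH r s J M M' -> J (uv s J tau 0) k = C0.
Proof.
  intros hE. simpl uv.
  assert (e : (fun _ : nat => C0) = (fun n => Cmul C0 ((fun _ : nat => C0) n))).
  { apply functional_extensionality. intros; unfold Cmul, C0; simpl; f_equal; ring. }
  rewrite e. rewrite (e_scal _ _ _ _ _ hE).
  - unfold Cmul, C0; simpl; f_equal; ring.
  - apply (finsupp r _ 0). intros. reflexivity.
Qed.

Definition inv s J tau n k := if inb (Hn s J tau n) (hin s J tau n) k then wv s J tau n k else C0.
Definition outv s J tau n k := if inb (Hn s J tau n) (hin s J tau n) k then C0 else wv s J tau n k.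

Fixpoint Zs s J tau n : nat -> Cx :=
  match n with O => fun _ => C0 | S m => fun k => Cadd (Zs s J tau m k) (inv s J tau m k) end.
Fixpoint Rs s J tau n : nat -> Cx :=
  match n with O => fun _ => C0 | S m => fun k => Cadd (Rs s J tau m k) (outv s J tau m k) end.

Lemma J_uv_decomp r s J M M' tau n k : EmbedH r s J M M' -> 0 < tau ->
  J (uv s J tau n) k = Cadd (Zs s J tau n k) (Rs s J tau n k).
Proof.
  intros hE ht. induction n.
  - rewrite (J_uv_0 r s J M M' tau k hE). simpl. rewrite Cadd_C0_l. reflexivity.
  - rewrite (J_uv_S r s J M M' tau n hE ht). rewrite IHn. simpl.
    unfold inv, outv. destruct (inb _ _ k).
    + destruct (Zs s J tau n k), (Rs s J tau n k), (wv s J tau n k). unfold Cadd, C0; simpl; f_equal; ring.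
    + destruct (Zs s J tau n k), (Rs s J tau n k), (wv s J tau n k). unfold Cadd, C0; simpl; f_equal; ring.
Qed.

Lemma Zs_supp r s J M M' tau n k : EmbedH r s J M M' -> 0 < tau ->
  (Hn s J tau n <= k)%nat -> Zs s J tau n k = C0.
Proof.
  intros hE ht. revert k. induction n; intros k hk; simpl; auto.
  rewrite Hn_S in hk. destruct (dat_spec r s J M M' tau n hE ht) as [_ [_ [h3 _]]].
  rewrite IHn by lia. unfold inv, inb. destruct (Nat.ltb_spec k (hin s J tau n)); [lia|].
  rewrite Bool.andb_false_r. apply Cadd_C0_r.
Qed.

Lemma ZI_eq r s J M M' tau n K : EmbedH r s J M M' -> 0 < tau ->
  fsum (fun k => pw s (Zs s J tau n k)) K =
  fsum (fun i => ins s (wv s J tau i) (Hn s J tau i) (hin s J tau i) K) n.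
Proof.
  intros hE ht. induction n.
  - simpl. rewrite (fsum_ext _ (fun _ => 0)) by (intros; apply pw_C0). rewrite fsum_const. simpl; ring.
  - simpl fsum at 2. rewrite <- IHn. unfold ins. rewrite <- fsum_add. apply fsum_ext. intros k _.
    simpl Zs. rewrite pw_add_disj.
    + unfold inv. destruct (inb _ _ k); [reflexivity|rewrite pw_C0; reflexivity].
    + unfold inv. destruct (inb (Hn s J tau n) (hin s J tau n) k) eqn:E; [left|right; auto].
      apply (Zs_supp r s J M M' tau); auto. unfold inb in E. apply Bool.andb_true_iff in E.
      destruct E as [E _]. apply Nat.leb_le in E. exact E.
Qed.

Lemma fsum_exch (g : nat -> nat -> R) n K :
  fsum (fun k => fsum (fun i => g i k) n) K = fsum (fun i => fsum (fun k => g i k) K) n.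
Proof.
  induction n; simpl.
  - rewrite fsum_const; simpl; ring.
  - rewrite fsum_add. rewrite IHn. reflexivity.
Qed.

Lemma pw_Rs_bound s J tau n k : 0 < s ->
  pw s (Rs s J tau n k) <= Q s ^ n * fsum (fun i => pw s (outv s J tau i k)) n.
Proof.
  intros hs. pose proof (Q_ge1 s hs) as hQ. induction n.
  - simpl. rewrite pw_C0. lra.
  - simpl Rs. simpl fsum. eapply Rle_trans. apply pw_quasi; auto.
    assert (1 <= Q s ^ n) by (apply pow_R1_Rle; lra).
    pose proof (fsum_nonneg (fun i => pw s (outv s J tau i k)) n (fun _ => pw_nonneg _ _)).
    pose proof (pw_nonneg s (outv s J tau n k)).
    simpl pow.
    assert (Q s * (pw s (Rs s J tau n k) + pw s (outv s J tau n k)) <=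
            Q s * (Q s ^ n * fsum (fun i => pw s (outv s J tau i k)) n + Q s ^ n * pw s (outv s J tau n k))).
    { apply Rmult_le_compat_l; [lra|]. apply Rplus_le_compat; auto. rewrite <- (Rmult_1_l (pw s _)) at 1.
      apply Rmult_le_compat_r; lra. }
    eapply Rle_trans; [exact H2|]. right; ring.
Qed.

Lemma RI_bound r s J M M' tau n K : EmbedH r s J M M' -> 0 < tau ->
  fsum (fun k => pw s (Rs s J tau n k)) K <= Q s ^ n * (INR n * tau).
Proof.
  intros hE ht. pose proof (e_s _ _ _ _ _ hE) as hs.
  eapply Rle_trans. apply fsum_le. intros k _. apply (pw_Rs_bound s J tau n k hs).
  rewrite fsum_scal. apply Rmult_le_compat_l. apply pow_le. pose proof (Q_ge1 s hs); lra.
  rewrite fsum_exch. rewrite <- fsum_const. apply fsum_le. intros i _.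
  destruct (dat_spec r s J M M' tau i hE ht) as [_ [_ [_ [hg _]]]].
  specialize (hg K). unfold outs in hg. unfold outv.
  eapply Rle_trans; [|exact hg]. right. apply fsum_ext. intros k _. unfold wv.
  destruct (inb _ _ k); [apply pw_C0|reflexivity].
Qed.

Definition alph r s M' := rpow (rpow 2 (/r) / M') s.
Definition bet r s M := rpow (M * rpow 2 (/r)) s.

Lemma alph_pos r s M' : 0 < M' -> 0 < alph r s M'.
Proof. intros; unfold alph. apply rpow_pos_lt. apply Rdiv_lt_0_compat; auto. apply rpow_pos_lt; lra. Qed.

Lemma dv_bounds r s J M M' a b : EmbedH r s J M M' -> (a < b)%nat ->
  alph r s M' <= lp_sum s (J (dv a b)) <= bet r s M.
Proof.
  intros hE hab. pose proof (e_r _ _ _ _ _ hE) as hr. pose proof (e_s _ _ _ _ _ hE) as hs.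
  pose proof (e_M _ _ _ _ _ hE) as hM. pose proof (e_M' _ _ _ _ _ hE) as hM'.
  destruct (dv_member r a b hab) as [hm hsum].
  pose proof (e_dom _ _ _ _ _ hE _ hm) as hd.
  pose proof (lp_sum_nonneg s _ hd) as hP.
  pose proof (e_up _ _ _ _ _ hE _ hm) as hu. pose proof (e_low _ _ _ _ _ hE _ hm) as hl.
  rewrite !lp_norm_eq, hsum in hu, hl.
  assert (h2 : 0 < rpow 2 (/r)) by (apply rpow_pos_lt; lra).
  split.
  - unfold alph. rewrite <- (rpow_inv_r (lp_sum s (J (dv a b))) s) by auto.
    apply rpow_le; auto. split. left; apply Rdiv_lt_0_compat; auto.
    apply Rmult_le_reg_r with M'; auto. unfold Rdiv. rewrite Rmult_assoc, Rinv_l by lra. lra.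
  - unfold bet. rewrite <- (rpow_inv_r (lp_sum s (J (dv a b))) s) by auto.
    apply rpow_le; auto. split; auto. apply rpow_nonneg.
Qed.

Lemma main_N r s J M M' N : EmbedH r s J M M' ->
  exists x, lp_member r x /\ lp_sum r x = 2 * INR N /\
    INR N * (alph r s M' / (2 * Q s)) <= lp_sum s (J x) /\
    lp_sum s (J x) <= INR N * (Q s * bet r s M + alph r s M' / 4).
Proof.
  intros hE. pose proof (e_r _ _ _ _ _ hE) as hr. pose proof (e_s _ _ _ _ _ hE) as hs.
  pose proof (e_M' _ _ _ _ _ hE) as hM'.
  pose proof (Q_ge1 s hs) as hQ. assert (hQN : 1 <= Q s ^ N) by (apply pow_R1_Rle; lra).
  set (al := alph r s M'). set (be := bet r s M).
  assert (hal : 0 < al) by (apply alph_pos; auto).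
  set (tau := al / (4 * Q s * Q s ^ N)).
  assert (ht : 0 < tau) by (unfold tau; apply Rdiv_lt_0_compat; [lra|]; nra).
  assert (htau : Q s * Q s ^ N * tau = al / 4) by (unfold tau; field; nra).
  assert (htau2 : tau <= al / 4).
  { assert (tau * 1 <= tau * (Q s * Q s ^ N)) by (apply Rmult_le_compat_l; nra). nra. }
  exists (uv s J tau N).
  pose proof (uv_member r s J M M' tau N hE ht) as hm.
  pose proof (e_dom _ _ _ _ _ hE _ hm) as hd.
  split; auto. split. apply (uv_sum r s J M M' tau N hE ht).
  set (W := J (uv s J tau N)).
  pose proof (RI_bound r s J M M' tau N) as hRI.
  assert (hpt1 : forall k, pw s (Zs s J tau N k) <= Q s * (pw s (W k) + pw s (Rs s J tau N k))).
  { intros k. unfold W. rewrite (J_uv_decomp r s J M M' tau N k hE ht). apply pw_quasi'; auto. }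
  assert (hpt2 : forall k, pw s (W k) <= Q s * (pw s (Zs s J tau N k) + pw s (Rs s J tau N k))).
  { intros k. unfold W. rewrite (J_uv_decomp r s J M M' tau N k hE ht). apply pw_quasi; auto. }
  assert (hP : forall i, alph r s M' <= lp_sum s (wv s J tau i) <= bet r s M).
  { intros i. unfold wv. apply (dv_bounds r s J M M'); auto. apply (dat_spec r s J M M' tau i hE ht). }
  split.
  - set (K := Hn s J tau N).
    assert (hins : INR N * (al - tau) <= fsum (fun i => ins s (wv s J tau i) (Hn s J tau i) (hin s J tau i) K) N).
    { rewrite <- fsum_const. apply fsum_le. intros i hi.
      destruct (dat_spec r s J M M' tau i hE ht) as [_ [_ [_ [_ hg]]]].
      eapply Rle_trans; [|apply (ins_mono _ _ _ _ (hin s J tau i))].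
      - destruct (hP i). unfold wv in *. fold al in H. lra.
      - unfold K. rewrite <- Hn_S. apply (Hn_mono r s J M M' tau); auto. }
    rewrite <- (ZI_eq r s J M M' tau N K hE ht) in hins.
    assert (fsum (fun k => pw s (Zs s J tau N k)) K <= Q s * (ps s W K + Q s ^ N * (INR N * tau))).
    { eapply Rle_trans. apply fsum_le. intros k _. apply hpt1.
      rewrite fsum_scal, fsum_add. apply Rmult_le_compat_l; [lra|]. apply Rplus_le_compat_l.
      apply hRI; auto. }
    pose proof (ps_le_sum s W K hd).
    pose proof (pos_INR N).
    assert (Q s * (Q s ^ N * (INR N * tau)) = INR N * (al/4)) by (rewrite <- htau; ring).
    assert (INR N * (al - tau) <= Q s * lp_sum s W + INR N * (al / 4)).
    { eapply Rle_trans. exact hins. eapply Rle_trans. exact H. rewrite Rmult_plus_distr_l, H2.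
      apply Rplus_le_compat_r. apply Rmult_le_compat_l; lra. }
    assert (INR N * (al/2) <= Q s * lp_sum s W) by nra.
    apply Rmult_le_reg_l with (Q s); [lra|].
    replace (Q s * (INR N * (al / (2 * Q s)))) with (INR N * (al / 2)) by (field; lra). exact H4.
  - apply sum_le_bound; auto. intros K.
    eapply Rle_trans. apply fsum_le. intros k _. apply hpt2.
    rewrite fsum_scal, fsum_add. rewrite (ZI_eq r s J M M' tau N K hE ht).
    pose proof (hRI K hE ht).
    assert (fsum (fun i => ins s (wv s J tau i) (Hn s J tau i) (hin s J tau i) K) N <= INR N * be).
    { rewrite <- fsum_const. apply fsum_le. intros i _.
      pose proof (ins_outs s (wv s J tau i) (Hn s J tau i) (hin s J tau i) K).
      assert (0 <= outs s (wv s J tau i) (Hn s J tau i) (hin s J tau i) K).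
      { apply fsum_nonneg. intros; destruct (inb _ _ _); [lra|apply pw_nonneg]. }
      pose proof (ps_le_sum s (wv s J tau i) K).
      assert (lp_member s (wv s J tau i)).
      { unfold wv. apply (e_dom _ _ _ _ _ hE). apply dv_member. apply (dat_spec r s J M M' tau i hE ht). }
      destruct (hP i). fold be in H5. specialize (H2 H3). lra. }
    assert (Q s * (Q s ^ N * (INR N * tau)) = INR N * (al/4)) by (rewrite <- htau; ring).
    pose proof (pos_INR N).
    assert (Q s * (fsum (fun i => ins s (wv s J tau i) (Hn s J tau i) (hin s J tau i) K) N +
      fsum (fun k => pw s (Rs s J tau N k)) K) <= Q s * (INR N * be + Q s ^ N * (INR N * tau))).
    { apply Rmult_le_compat_l; lra. }
    eapply Rle_trans. exact H3. rewrite Rmult_plus_distr_l, H1. right. ring.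
Qed.

Lemma growth_contra (a b c : R) : 0 < a -> 0 < b -> a <> b ->
  0 < c -> (forall N : nat, (1 <= N)%nat -> rpow (INR N) a <= c * rpow (INR N) b /\ rpow (INR N) b <= c * rpow (INR N) a) -> False.
Proof.
  intros ha hb hab hc h.
  destruct (Rlt_or_le b a) as [hl|hl].
  - destruct (rpow_unbounded (a - b) c ltac:(lra)) as [N [hN hc']].
    destruct (h N hN) as [h1 _].
    assert (hNp : 0 < INR N) by (apply lt_0_INR; lia).
    replace a with ((a - b) + b) in h1 by ring. rewrite rpow_plus in h1 by auto.
    pose proof (rpow_pos_lt (INR N) b hNp). nra.
  - assert (a < b) by lra.
    destruct (rpow_unbounded (b - a) c ltac:(lra)) as [N [hN hc']].
    destruct (h N hN) as [_ h1].
    assert (hNp : 0 < INR N) by (apply lt_0_INR; lia).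
    replace b with ((b - a) + a) in h1 by ring. rewrite rpow_plus in h1 by auto.
    pose proof (rpow_pos_lt (INR N) a hNp). nra.
Qed.

Lemma embed_contra r s J M M' : EmbedH r s J M M' -> r <> s -> False.
Proof.
  intros hE hrs. pose proof (e_r _ _ _ _ _ hE) as hr. pose proof (e_s _ _ _ _ _ hE) as hs.
  pose proof (e_M _ _ _ _ _ hE) as hM. pose proof (e_M' _ _ _ _ _ hE) as hM'.
  pose proof (Q_ge1 s hs) as hQ.
  set (A := alph r s M' / (2 * Q s)). set (Bc := Q s * bet r s M + alph r s M' / 4).
  assert (hA : 0 < A) by (unfold A; apply Rdiv_lt_0_compat; [apply alph_pos; auto|lra]).
  assert (hB : 0 < Bc).
  { unfold Bc. pose proof (alph_pos r s M' hM'). assert (0 <= bet r s M) by apply rpow_nonneg. nra. }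
  set (t2 := rpow 2 (/r)). assert (ht2 : 0 < t2) by (apply rpow_pos_lt; lra).
  set (rA := rpow A (/s)). assert (hrA : 0 < rA) by (apply rpow_pos_lt; lra).
  set (rB := rpow Bc (/s)). assert (hrB : 0 < rB) by (apply rpow_pos_lt; lra).
  set (c := M * t2 / rA + M' * rB / t2).
  assert (hc : 0 < c).
  { unfold c. assert (0 < M*t2/rA) by (apply Rdiv_lt_0_compat; nra).
    assert (0 < M'*rB/t2) by (apply Rdiv_lt_0_compat; nra). lra. }
  apply (growth_contra (/s) (/r) c); try (apply Rinv_0_lt_compat; lra); auto.
  { intro e. apply hrs. rewrite <- (Rinv_inv r), <- (Rinv_inv s). rewrite e. reflexivity. }
  intros N hN.
  assert (hNp : 0 < INR N) by (apply lt_0_INR; lia).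
  destruct (main_N r s J M M' N hE) as [x [hm [hsr [hlo hhi]]]]. fold A Bc in hlo, hhi.
  pose proof (e_up _ _ _ _ _ hE _ hm) as hu. pose proof (e_low _ _ _ _ _ hE _ hm) as hl.
  rewrite !lp_norm_eq, hsr in hu, hl.
  rewrite rpow_mult in hu, hl by lra. fold t2 in hu, hl.
  set (P := lp_sum s (J x)) in *.
  assert (h1 : rA * rpow (INR N) (/s) <= rpow P (/s)).
  { unfold rA. rewrite <- rpow_mult by lra. apply rpow_le. apply Rinv_0_lt_compat; lra. split; [nra|]. lra. }
  assert (h2 : rpow P (/s) <= rB * rpow (INR N) (/s)).
  { unfold rB. rewrite <- rpow_mult by lra. apply rpow_le. apply Rinv_0_lt_compat; lra. split; [|nra].
    pose proof (pos_INR N). nra. }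
  pose proof (rpow_pos_lt (INR N) (/s) hNp). pose proof (rpow_pos_lt (INR N) (/r) hNp).
  set (X := rpow (INR N) (/s)) in *. set (Y := rpow (INR N) (/r)) in *.
  split.
  -
    assert (rA * X <= M * (t2 * Y)) by lra.
    assert (X <= (M * t2 / rA) * Y).
    { apply Rmult_le_reg_l with rA; auto. replace (rA * (M * t2 / rA * Y)) with (M * (t2 * Y)) by (field; lra). lra. }
    assert (0 <= M' * rB / t2 * Y) by (apply Rmult_le_pos; [left; apply Rdiv_lt_0_compat; nra|lra]).
    unfold c. nra.
  - assert (t2 * Y <= M' * (rB * X)) by nra.
    assert (Y <= (M' * rB / t2) * X).
    { apply Rmult_le_reg_l with t2; auto. replace (t2 * (M' * rB / t2 * X)) with (M' * (rB * X)) by (field; lra). lra. }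
    assert (0 <= M * t2 / rA * X) by (apply Rmult_le_pos; [left; apply Rdiv_lt_0_compat; nra|lra]).
    unfold c. nra.
Qed.

Lemma bscal_zero (X : Banach) a : bscal X a (bzero X) = bzero X.
Proof.
  set (z := bscal X a (bzero X)).
  assert (hz : z = badd X z z).
  { unfold z. rewrite <- bscal_addv. rewrite badd_zero. reflexivity. }
  rewrite <- (badd_opp X z). rewrite hz at 2. rewrite <- badd_assoc. rewrite badd_opp, badd_zero. reflexivity.
Qed.

Lemma bnorm_bzero (X : Banach) : bnorm X (bzero X) = 0.
Proof.
  rewrite <- (bscal_zero X C0). rewrite bnorm_scal, Cmod_C0. ring.
Qed.

Lemma sqrt_sq_le a b : 0 <= a -> a <= sqrt (a^2 + b^2).
Proof.
  intros ha. rewrite <- (sqrt_pow2 a) at 1 by auto. apply sqrt_le_1_alt.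
  pose proof (pow2_ge_0 b). lra.
Qed.

Lemma sqrt_sq_0 a b : 0 <= a -> b = 0 -> sqrt (a^2 + b^2) = a.
Proof. intros ha hb. subst. replace (a^2 + 0^2) with (a^2) by ring. apply sqrt_pow2; auto. Qed.

Lemma extract (A C : NSpace) (B1 B2 : Banach) f :
  invertible_op (NSsum A (NS_of_Banach B1)) (NSsum C (NS_of_Banach B2)) f ->
  trivial_space B1 -> (forall x, 0 <= nnorm A x) -> (forall x, 0 <= nnorm C x) ->
  exists (J : ncar C -> ncar A) M M', 0 < M /\ 0 < M' /\
    (forall c, ndom C c -> ndom A (J c)) /\
    (forall c c', ndom C c -> ndom C c' -> J (nadd C c c') = nadd A (J c) (J c')) /\
    (forall a c, ndom C c -> J (nscal C a c) = nscal A a (J c)) /\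
    (forall c, ndom C c -> nnorm A (J c) <= M * nnorm C c) /\
    (forall c, ndom C c -> nnorm C c <= M' * nnorm A (J c)).
Proof.
  intros [[fd [fa [fs [Mf hMf]]]] [g [[gd [ga [gs [Mg hMg]]]] [gf fg]]]] htriv hA hC.
  exists (fun c => fst (g (c, bzero B2))), (Rmax Mg 1), (Rmax Mf 1).
  split; [pose proof (Rmax_r Mg 1); lra|]. split; [pose proof (Rmax_r Mf 1); lra|].
  split; [|split; [|split; [|split]]].
  - intros c hc. apply (gd (c, bzero B2)). simpl. auto.
  - intros c c' hc hc'.
    assert (e : (nadd C c c', bzero B2) = nadd (NSsum C (NS_of_Banach B2)) (c, bzero B2) (c', bzero B2)).
    { simpl. rewrite badd_zero. reflexivity. }
    rewrite e. rewrite ga by (simpl; auto). reflexivity.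
  - intros a c hc.
    assert (e : (nscal C a c, bzero B2) = nscal (NSsum C (NS_of_Banach B2)) a (c, bzero B2)).
    { simpl. rewrite bscal_zero. reflexivity. }
    rewrite e. rewrite gs by (simpl; auto). reflexivity.
  - intros c hc. specialize (hMg (c, bzero B2) (conj hc I)). cbn [nnorm NSsum NS_of_Banach fst snd] in hMg.
    rewrite bnorm_bzero in hMg. rewrite (sqrt_sq_0 (nnorm C c) 0 (hC c) eq_refl) in hMg.
    pose proof (sqrt_sq_le (nnorm A (fst (g (c, bzero B2)))) (bnorm B1 (snd (g (c, bzero B2)))) (hA _)) as hq.
    eapply Rle_trans; [exact hq|]. eapply Rle_trans; [exact hMg|]. apply Rmult_le_compat_r; auto. apply Rmax_l.
  - intros c hc.
    assert (e : g (c, bzero B2) = (fst (g (c, bzero B2)), bzero B1)).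
    { destruct (g (c, bzero B2)) as [x y]. simpl. rewrite (htriv y). reflexivity. }
    pose proof (fg (c, bzero B2) (conj hc I)) as hfg. rewrite e in hfg.
    assert (hd : ndom (NSsum A (NS_of_Banach B1)) (fst (g (c, bzero B2)), bzero B1)).
    { simpl. split; auto. apply (gd (c, bzero B2)). simpl; auto. }
    specialize (hMf _ hd). rewrite hfg in hMf. cbn [nnorm NSsum NS_of_Banach fst snd] in hMf.
    rewrite !bnorm_bzero, !sqrt_sq_0 in hMf by auto.
    eapply Rle_trans. exact hMf. apply Rmult_le_compat_r; auto. apply Rmax_l.
Qed.

Theorem proposition4p3 (p q : R) (hp : 1 <= p) (hq : 1 <= q) (hpq : p <> q)
  (T : ncar (lp p) -> ncar (lp p)) (S : ncar (lp q) -> ncar (lp q))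
  (hT : bounded_op (lp p) (lp p) T) (hS : bounded_op (lp q) (lp q) S) :
  ~ equiv_after_one_sided_ext (lp p) (lp q) T S.
Proof.
  intros [X' [Y' [htriv [E [F [hE [hF _]]]]]]].
  destruct htriv as [hX | hY].
  - destruct (extract (lp p) (lp q) X' Y' F hF hX (fun x => lp_norm_nonneg p x) (fun x => lp_norm_nonneg q x))
      as [J [M [M' [hM [hM' [hd [ha [hs [hu hl]]]]]]]]].
    apply (embed_contra q p J M M'); [|auto].
    constructor; auto; lra.
  - destruct (extract (lp q) (lp p) Y' X' E hE hY (fun x => lp_norm_nonneg q x) (fun x => lp_norm_nonneg p x))
      as [J [M [M' [hM [hM' [hd [ha [hs [hu hl]]]]]]]]].
    apply (embed_contra p q J M M'); [|auto].
    constructor; auto; lra.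
Qed.
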